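(* Let $\epsilon, b \in \mathbb{C}$ with $\epsilon \neq 0$. Consider the map $\Phi:(x,y)\mapsto(\widetilde x,\widetilde y)$ of $\mathbb{C}^2$ defined implicitly by the system \[ \frac{\widetilde x - x}{\epsilon}=\widetilde x\, y+x\,\widetilde y, \qquad \frac{\widetilde y - y}{\epsilon}= b+x\widetilde x -(2-\epsilon^2b)\, y\widetilde y, \] which is linear in $(\widetilde x,\widetilde y)$ and so defines a rational map (birational). Then $\Phi$ is integrable in the sense that the rational function \[ H(x,y;\epsilon)=\frac{x^2\big((1-\tfrac{1}{2}\epsilon^2b)y^2-\tfrac{1}{4}(1-\epsilon^2b)x^2-\tfrac{1}{2}b\big)}{\big(1+\epsilon(y+x)\big)\big(1+\epsilon(y-x)\big)\big(1-\epsilon(y+x)\big)\big(1-\epsilon(y-x)\big)} \] is an integral of motion of $\Phi$: $H(\widetilde x,\widetilde y;\epsilon)=H(x,y;\epsilon)$ for all $(x,y)$ at which $\Phi$ and both sides are defined.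
   Context: This map is a modification of the Kahan discretization of the planar system $\dot x=2xy$, $\dot y=b+x^2-2y^2$ (whose standard Kahan discretization has coefficient $2$ instead of $2-\epsilon^2 b$ in front of $y\widetilde y$). An integral of motion of a map $\Phi$ is a (nonconstant) function $H$ with $H\circ\Phi=H$. *)

(* Defs.v *)
(* The complex field C is modelled by an arbitrary
   numClosedFieldType (algebraically closed field of characteristic 0,
   e.g. algC); the claim is a rational identity, so this covers C. *)
From HB Require Import structures.
From mathcomp Require Import all_boot all_order all_algebra.
Set Implicit Arguments. Unset Strict Implicit. Unset Printing Implicit Defensive.
Import Order.TTheory GRing.Theory Num.Theory.
Local Open Scope ring_scope.

Definition Hden (R : numClosedFieldType) (e x y : R) : R :=
  (1 + e * (y + x)) * (1 + e * (y - x)) * (1 - e * (y + x)) * (1 - e * (y - x)).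

Definition Hnum (R : numClosedFieldType) (e b x y : R) : R :=
  x ^+ 2 * ((1 - e ^+ 2 * b / 2) * y ^+ 2 - (1 - e ^+ 2 * b) * x ^+ 2 / 4 - b / 2).

Definition H (R : numClosedFieldType) (e b x y : R) : R :=
  Hnum e b x y / Hden e x y.

(* Determinant of the linear system defining (xt, yt) from (x, y):
     (1 - e y) xt - e x yt = x,
     - e x xt + (1 + e (2 - e^2 b) y) yt = y + e b.
   The map Phi is defined exactly where this is nonzero. *)
Definition Phi_det (R : numClosedFieldType) (e b x y : R) : R :=
  (1 - e * y) * (1 + e * (2 - e ^+ 2 * b) * y) - e ^+ 2 * x ^+ 2.

(* Main.v *)
Require Import Defs.
From HB Require Import structures.
From mathcomp Require Import all_boot all_order all_algebra.
From mathcomp Require Import ring lra.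
Import Order.TTheory GRing.Theory Num.Theory.
Local Open Scope ring_scope.

Theorem theorem1 (R : numClosedFieldType) (e b x y xt yt : R) :
  e != 0 ->
  Phi_det e b x y != 0 ->
  (xt - x) / e = xt * y + x * yt ->
  (yt - y) / e = b + x * xt - (2 - e ^+ 2 * b) * y * yt ->
  Hden e x y != 0 ->
  Hden e xt yt != 0 ->
  H e b xt yt = H e b x y.
Proof.
move=> e0 D0 E1 E2 H0 H1.
set c := 2 - e ^+ 2 * b.
have {}E1 : xt - x = e * (xt * y + x * yt).
  by rewrite -E1; field.
have {}E2 : yt - y = e * (b + x * xt - c * y * yt).
  by rewrite -E2; field.
set D := Phi_det e b x y in D0.
have hx : xt = (x * (1 + e * c * y) + e * x * (y + e * b)) / D.
  apply: (mulIf D0); rewrite mulfVK // /D /Phi_det -/c.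
  apply/eqP; rewrite -subr_eq0; apply/eqP.
  transitivity ((1 + e * c * y) * (xt - x - e * (xt * y + x * yt))
     + e * x * (yt - y - e * (b + x * xt - c * y * yt))); last first.
    by rewrite E1 E2 !subrr; ring.
  ring.
have hy : yt = ((1 - e * y) * (y + e * b) + e * x ^+ 2) / D.
  apply: (mulIf D0); rewrite mulfVK // /D /Phi_det -/c.
  apply/eqP; rewrite -subr_eq0; apply/eqP.
  transitivity (e * x * (xt - x - e * (xt * y + x * yt))
     + (1 - e * y) * (yt - y - e * (b + x * xt - c * y * yt))); last first.
    by rewrite E1 E2 !subrr; ring.
  ring.
rewrite /H; apply/eqP; rewrite eqr_div //; apply/eqP.
rewrite hx hy /D /Phi_det /Hnum /Hden /c.
move: D0; rewrite /D /Phi_det /c => D0.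
field.
by rewrite exprMn.
Qed.
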